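(* Let $\alpha\in\mathbb{Q}$ and let $$f(x)=c_0+c_1(x-\alpha)^{e_1}+\cdots+c_t(x-\alpha)^{e_t}\in\mathbb{Q}[x]$$ with $c_1,\dots,c_t\neq 0$ and integers $0<e_1<\cdots<e_t$, so that $n=\deg f=e_t$. Let $B_T,B_H,B_N\in\mathbb{N}$ satisfy $t\le B_T$, $\mathrm{size}(c_i)\le B_H$ for $0\le i\le t$, and $\log_2 n\le B_N$, and suppose $\deg f>2B_T$. Then there exist $C_1,C_2\in\mathbb{N}$ with $\log_2 C_1\le 2B_H$ and $\log_2 C_2\le B_N(3B_T-1)$ such that for every prime $p$ with $p\nmid C_1$ and $(p-1)\nmid C_2$, we have $\deg f^{(p)}>2B_T$.
   Context: For $q\in\mathbb{Q}$ written as $q=a/b$ with $a\in\mathbb{Z}$, $b\in\mathbb{N}$, $\gcd(a,b)=1$, $\mathrm{size}(q)=\lceil\log_2(|a|+1)\rceil+\lceil\log_2(b+1)\rceil+1$. For a prime $p$ and $f\in\mathbb{Q}[x]$, $f^{(p)}\in\mathbb{Z}_p[x]$ denotes the unique polynomial of degree less than $p$ which is congruent to $f$ modulo $x^p-x$ and whose coefficients are reduced modulo $p$. *)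

(* Defs.v *)
From HB Require Import structures.
From mathcomp Require Import all_boot all_order all_algebra.
Set Implicit Arguments. Unset Strict Implicit. Unset Printing Implicit Defensive.
Import Order.TTheory GRing.Theory Num.Theory.
Local Open Scope ring_scope.

Definition clog2 (m : nat) : nat := up_log 2 m.

(* size(a/b) = ceil(log2(|a|+1)) + ceil(log2(b+1)) + 1, with a/b in lowest
   terms, b > 0 (rat stores numq/denq in lowest terms, denq > 0). *)
Definition qsize (q : rat) : nat :=
  (clog2 (`|numq q|%N).+1 + clog2 (`|denq q|%N).+1 + 1)%N.

Definition p_integral (p : nat) (q : rat) : bool := ~~ (p %| `|denq q|%N)%N.

(* reduction of a rational modulo p (meaningful when q is p-integral) *)
Definition rat_modp (p : nat) (q : rat) : 'F_p :=
  (numq q)%:~R / (denq q)%:~R.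

(* f^(p): coefficients of f reduced mod p, then the remainder modulo x^p - x,
   i.e. the unique polynomial of degree < p congruent to f mod x^p - x. *)
Definition red_p (p : nat) (f : {poly rat}) : {poly 'F_p} :=
  (map_poly (rat_modp p) f) %% ('X^p - 'X).

Definition shifted_sparse (alpha : rat) (t : nat) (c : nat -> rat) (e : nat -> nat)
  : {poly rat} :=
  (c 0%N)%:P + \sum_(1 <= i < t.+1) c i *: ('X - alpha%:P) ^+ (e i).

(* Main.v *)
Require Import Defs.
From HB Require Import structures.
From mathcomp Require Import all_boot all_order all_algebra all_field.
From mathcomp Require Import ring zify.
Import Order.TTheory GRing.Theory Num.Theory.
Local Open Scope ring_scope.

Lemma Fp_int0 p (pr : prime p) (z : int) :
  ((z%:~R : 'F_p) == 0) = (p %| `|z|)%N.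
Proof.
have chp : p \in [char 'F_p] by exact: pchar_Fp.
case: z => n.
  by rewrite /= (dvdn_pcharf chp).
by rewrite NegzE mulrNz oppr_eq0 abszN /= (dvdn_pcharf chp).
Qed.

Lemma ratp_frac p (pr : prime p) (u v : int) : ~~ (p %| `|v|)%N ->
  p_integral p (u%:~R / v%:~R) /\
  rat_modp p (u%:~R / v%:~R) = (u%:~R / v%:~R : 'F_p).
Proof.
move=> pv.
have v0 : v != 0 by apply: contraNneq pv => ->.
set x := u%:~R / v%:~R.
have E : numq x * v = u * denq x.
  apply: (@intr_inj rat); rewrite !rmorphM /= numqE /x.
  by rewrite mulrAC divfK ?intr_eq0 // mulrC.
have Ea : (`|numq x| * `|v| = `|u| * `|denq x|)%N.
  by rewrite -!abszM E.
have pd : ~~ (p %| `|denq x|)%N.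
  apply/negP => pd.
  have : (p %| `|numq x| * `|v|)%N by rewrite Ea dvdn_mull.
  rewrite Euclid_dvdM // (negbTE pv) orbF => pn.
  have := coprime_num_den x; rewrite /coprime => /eqP g1.
  have : (p %| gcdn `|numq x| `|denq x|)%N by rewrite dvdn_gcd pn.
  by rewrite g1 dvdn1 => /eqP p1; rewrite p1 in pr.
split; first exact: pd.
rewrite /rat_modp.
have d0 : (denq x)%:~R != 0 :> 'F_p by rewrite Fp_int0.
have v0' : v%:~R != 0 :> 'F_p by rewrite Fp_int0.
have E' : (numq x)%:~R * v%:~R = u%:~R * (denq x)%:~R :> 'F_p.
  by rewrite -!intrM E.
apply/eqP; rewrite eqr_div // E' //.
Qed.
Lemma ratp_add p (pr : prime p) x y : p_integral p x -> p_integral p y ->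
  p_integral p (x + y) /\ rat_modp p (x + y) = rat_modp p x + rat_modp p y.
Proof.
move=> px py.
have dx : (denq x)%:~R != 0 :> 'F_p by rewrite Fp_int0.
have dy : (denq y)%:~R != 0 :> 'F_p by rewrite Fp_int0.
have dxq : (denq x)%:~R != 0 :> rat by rewrite intr_eq0 denq_neq0.
have dyq : (denq y)%:~R != 0 :> rat by rewrite intr_eq0 denq_neq0.
have -> : x + y = (numq x * denq y + numq y * denq x)%:~R / (denq x * denq y)%:~R.
  rewrite -{1}(divq_num_den x) -{1}(divq_num_den y) !rmorphD !rmorphM /=.
  by field; rewrite dxq dyq.
have pd : ~~ (p %| `|(denq x * denq y)%R|)%N.
  by rewrite abszM Euclid_dvdM // negb_or; apply/andP; split.
have [i e] := ratp_frac _ pr ((numq x * denq y + numq y * denq x)%R) _ pd.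
split; first exact: i. rewrite e.
rewrite /rat_modp !rmorphD !rmorphM /=.
by field; rewrite dx dy.
Qed.

Lemma ratp_mul p (pr : prime p) x y : p_integral p x -> p_integral p y ->
  p_integral p (x * y) /\ rat_modp p (x * y) = rat_modp p x * rat_modp p y.
Proof.
move=> px py.
have dx : (denq x)%:~R != 0 :> 'F_p by rewrite Fp_int0.
have dy : (denq y)%:~R != 0 :> 'F_p by rewrite Fp_int0.
have dxq : (denq x)%:~R != 0 :> rat by rewrite intr_eq0 denq_neq0.
have dyq : (denq y)%:~R != 0 :> rat by rewrite intr_eq0 denq_neq0.
have -> : x * y = (numq x * numq y)%:~R / (denq x * denq y)%:~R.
  rewrite -{1}(divq_num_den x) -{1}(divq_num_den y) !rmorphM /=.
  by field; rewrite dxq dyq.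
have pd : ~~ (p %| `|(denq x * denq y)%R|)%N.
  by rewrite abszM Euclid_dvdM // negb_or; apply/andP; split.
have [i e] := ratp_frac _ pr ((numq x * numq y)%R) _ pd.
split; first exact: i. rewrite e.
rewrite /rat_modp !rmorphM /=.
by field; rewrite dx dy.
Qed.

Lemma ratp_int p (pr : prime p) (z : int) :
  p_integral p z%:~R /\ rat_modp p z%:~R = z%:~R.
Proof.
have h : ~~ (p %| `|1%:Z|)%N by rewrite /= dvdn1; apply/eqP => p1; rewrite p1 in pr.
have := ratp_frac _ pr z _ h; by rewrite !divr1.
Qed.

Lemma ratp_opp p (pr : prime p) x : p_integral p x ->
  p_integral p (- x) /\ rat_modp p (- x) = - rat_modp p x.
Proof.
move=> px; rewrite -mulN1r; have [i1 r1] := ratp_int p pr (-1).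
have [i e] := ratp_mul _ pr _ _ i1 px; split => //; by rewrite e r1 mulN1r.
Qed.

Lemma ratp0_eq p (pr : prime p) x : p_integral p x ->
  (rat_modp p x == 0) = (p %| `|numq x|)%N.
Proof.
move=> px; have dx : (denq x)%:~R != 0 :> 'F_p by rewrite Fp_int0.
by rewrite /rat_modp mulf_eq0 invr_eq0 (negbTE dx) orbF Fp_int0.
Qed.

Lemma ratp_0 [p] (pr : prime p) : p_integral p 0 /\ rat_modp p 0 = 0.
Proof. by have := ratp_int p pr 0. Qed.

Lemma ratp_1 [p] (pr : prime p) : p_integral p 1 /\ rat_modp p 1 = 1.
Proof. by have := ratp_int p pr 1. Qed.

Lemma ratp_sum [p] (pr : prime p) (I : Type) (r : seq I) (P : pred I) (F : I -> rat) :
  (forall i, P i -> p_integral p (F i)) ->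
  p_integral p (\sum_(i <- r | P i) F i) /\
  rat_modp p (\sum_(i <- r | P i) F i) = \sum_(i <- r | P i) rat_modp p (F i).
Proof.
move=> hF.
apply: (big_ind2 (fun a b => p_integral p a /\ rat_modp p a = b)).
- exact: ratp_0.
- move=> x1 x2 y1 y2 [i1 e1] [i2 e2].
  have [i e] := ratp_add _ pr _ _ i1 i2; split => //; by rewrite e e1 e2.
- by move=> i Pi; split => //; apply: hF.
Qed.

Definition intP p (P : {poly rat}) := forall k, p_integral p P`_k.
Definition PhiP p (P : {poly rat}) : {poly 'F_p} := map_poly (rat_modp p) P.
Definition RelP p P (Q : {poly 'F_p}) := intP p P /\ PhiP p P = Q.

Lemma coef_Phi [p] (pr : prime p) (P : {poly rat}) k : (PhiP p P)`_k = rat_modp p P`_k.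
Proof. by rewrite /PhiP coef_map_id0 //; case: (ratp_0 pr). Qed.

Lemma RelP_coef [p] (pr : prime p) (P : {poly rat}) (Q : {poly 'F_p}) :
  (forall k, p_integral p P`_k /\ rat_modp p P`_k = Q`_k) -> RelP p P Q.
Proof.
move=> h; split; first by move=> k; case: (h k).
by apply/polyP => k; rewrite coef_Phi //; case: (h k).
Qed.

Lemma RelP_add [p] (pr : prime p) (P1 : {poly rat}) (Q1 : {poly 'F_p}) (P2 : {poly rat}) (Q2 : {poly 'F_p}) : RelP p P1 Q1 -> RelP p P2 Q2 ->
  RelP p (P1 + P2) (Q1 + Q2).
Proof.
move=> [i1 <-] [i2 <-]; apply: RelP_coef => // k.
have [i e] := ratp_add _ pr _ _ (i1 k) (i2 k).
by rewrite !coefD i e !coef_Phi.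
Qed.

Lemma RelP_mul [p] (pr : prime p) (P1 : {poly rat}) (Q1 : {poly 'F_p}) (P2 : {poly rat}) (Q2 : {poly 'F_p}) : RelP p P1 Q1 -> RelP p P2 Q2 ->
  RelP p (P1 * P2) (Q1 * Q2).
Proof.
move=> [i1 <-] [i2 <-]; apply: RelP_coef => // k.
rewrite !coefM.
have h : forall j : 'I_k.+1, true -> p_integral p (P1`_j * P2`_(k - j)).
  by move=> j _; have [] := ratp_mul _ pr _ _ (i1 j) (i2 (k - j)%N).
have [i e] := @ratp_sum _ pr 'I_k.+1 (index_enum _) (fun _ => true) (fun j : 'I_k.+1 => P1`_j * P2`_(k - j)%N) h; split => //; rewrite e.
apply: eq_bigr => j _; have [_ ->] := ratp_mul _ pr _ _ (i1 j) (i2 (k - j)%N).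
by rewrite !coef_Phi.
Qed.

Lemma RelP_C [p] (pr : prime p) c : p_integral p c -> RelP p c%:P (rat_modp p c)%:P.
Proof.
move=> ic; apply: RelP_coef => // k; rewrite !coefC; case: (k == 0%N) => //.
exact: ratp_0.
Qed.

Lemma RelP_X [p] (pr : prime p) : RelP p 'X 'X.
Proof.
apply: RelP_coef => // k; rewrite !coefX; case: (k == 1%N).
exact: ratp_1. exact: ratp_0.
Qed.

Lemma RelP_exp [p] (pr : prime p) (P : {poly rat}) (Q : {poly 'F_p}) n : RelP p P Q -> RelP p (P ^+ n) (Q ^+ n).
Proof.
move=> h; elim: n => [|n IH].
  by have [i1 e1] := ratp_1 pr; move: (RelP_C pr 1 i1); rewrite e1 polyC1 !expr0.
by rewrite !exprS; apply: RelP_mul.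
Qed.

Lemma RelP_scale [p] (pr : prime p) c (P : {poly rat}) (Q : {poly 'F_p}) : p_integral p c -> RelP p P Q ->
  RelP p (c *: P) (rat_modp p c *: Q).
Proof. by move=> ic h; rewrite -!mul_polyC; apply: RelP_mul => //; apply: RelP_C. Qed.

Lemma RelP_sum [p] (pr : prime p) (I : Type) (r : seq I) (Pr : pred I) (F : I -> {poly rat}) (G : I -> {poly 'F_p}) :
  (forall i, Pr i -> RelP p (F i) (G i)) ->
  RelP p (\sum_(i <- r | Pr i) F i) (\sum_(i <- r | Pr i) G i).
Proof.
move=> h; apply: (big_ind2 (RelP p)) => //.
- by have [i1 e1] := ratp_0 pr; move: (RelP_C pr 0 i1); rewrite e1 polyC0.
- by move=> ? ? ? ?; apply: RelP_add.
Qed.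

Lemma intP_comp [p] (pr : prime p) (P Q : {poly rat}) : intP p P -> intP p Q -> intP p (P \Po Q).
Proof.
move=> iP iQ; rewrite comp_polyE.
have [h _] : RelP p (\sum_(i < size P) P`_i *: Q ^+ i)
                    (\sum_(i < size P) rat_modp p P`_i *: PhiP p Q ^+ i).
  apply: (RelP_sum pr) => i _; apply: (RelP_scale pr) => //; apply: (RelP_exp pr).
  by [].
by [].
Qed.

Lemma frobY [p] (pr : prime p) (a : 'F_p) :
  ('X - a%:P) ^+ p = ('X - a%:P) + ('X^p - 'X).
Proof.
have chp : p \in [pchar {poly 'F_p}] by rewrite pchar_poly pchar_Fp.
rewrite -(pFrobenius_autE chp) pFrobenius_autB_comm; last exact: mulrC.
rewrite !pFrobenius_autE -polyC_exp.
have -> : a ^+ p = a by rewrite -{2}(expf_card a) card_Fp.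
by ring.
Qed.

Definition rexp p e := ((e.-1 %% p.-1).+1)%N.

Lemma Y_red [p] (pr : prime p) (a : 'F_p) e : (0 < e)%N ->
  exists Q : {poly 'F_p},
    ('X - a%:P) ^+ e = ('X - a%:P) ^+ (rexp p e) + Q * ('X^p - 'X).
Proof.
have p2 : (2 <= p)%N by apply: prime_gt1.
elim: e {-2}e (leqnn e) => [|n IH] e le0 e0; first by move: e0; rewrite leqn0 in le0; move/eqP: le0 => ->.
case: (ltnP e p) => hep.
  exists 0; rewrite mul0r addr0 /rexp modn_small; first by rewrite prednK.
  by rewrite -ltnS prednK // (ltn_predK p2).
have e'0 : (0 < e - p.-1)%N by rewrite subn_gt0 (leq_trans _ hep) // ltn_predL prime_gt0.
have [Q' hQ'] := IH (e - p.-1)%N ltac:(lia) e'0.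
exists (('X - a%:P) ^+ (e - p) + Q').
have -> : e = ((e - p) + p)%N by rewrite subnK.
rewrite exprD (frobY pr).
have -> : rexp p (e - p + p) = rexp p (e - p.-1).
  rewrite /rexp; congr (_.+1).
  have -> : (e - p + p).-1 = (e - p.-1).-1 + p.-1 by lia.
  by rewrite modnDr.
rewrite mulrDr.
have -> : ('X - a%:P) ^+ (e - p) * ('X - a%:P) = ('X - a%:P) ^+ (e - p.-1).
  by rewrite -exprSr; congr (_ ^+ _); lia.
rewrite hQ'.
rewrite addnK; ring.
Qed.

Lemma uniq_index_iota m n : uniq (index_iota m n).
Proof. by rewrite /index_iota iota_uniq. Qed.

Lemma coef_sparse (R : nzRingType) (d : R) (a : nat -> R) (E : nat -> nat) (t j : nat) :
  (1 <= j <= t)%N -> (forall i, (1 <= i <= t)%N -> i != j -> E i != E j) -> (0 < E j)%N ->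
  (d%:P + \sum_(1 <= i < t.+1) a i *: 'X^(E i))`_(E j) = a j.
Proof.
move=> hj hE hEj.
rewrite coefD coefC (gtn_eqF hEj) add0r coef_sum.
rewrite (bigD1_seq j) /=; last exact: uniq_index_iota.
  rewrite coefZ coefXn eqxx mulr1 big1_seq ?addr0 // => i /andP [ij].
  rewrite mem_index_iota ltnS => hi.
  by rewrite coefZ coefXn eq_sym (negbTE (hE i hi ij)) mulr0.
by rewrite mem_index_iota ltnS.
Qed.

Lemma coef_sparse_hi (R : nzRingType) (d : R) (a : nat -> R) (E : nat -> nat) (t k : nat) :
  (forall i, (1 <= i <= t)%N -> (E i < k)%N) -> (0 < k)%N ->
  (d%:P + \sum_(1 <= i < t.+1) a i *: 'X^(E i))`_k = 0.
Proof.
move=> hE hk.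
rewrite coefD coefC (gtn_eqF hk) add0r coef_sum big1_seq // => i /andP [_].
rewrite mem_index_iota ltnS => hi.
by rewrite coefZ coefXn (gtn_eqF (hE i hi)) mulr0.
Qed.

Lemma size_gt_coef (R : nzRingType) (P : {poly R}) k : P`_k != 0 -> (k < size P)%N.
Proof.
move=> h; rewrite ltnNge; apply/negP => /leq_sizeP/(_ k (leqnn k)) h0.
by rewrite h0 eqxx in h.
Qed.

Lemma sum_red [p] (pr : prime p) (a : 'F_p) (r : seq nat) (w : nat -> 'F_p) (E : nat -> nat) :
  (forall i, i \in r -> (0 < E i)%N) ->
  exists Q : {poly 'F_p},
    \sum_(i <- r) w i *: ('X - a%:P) ^+ (E i) =
    \sum_(i <- r) w i *: ('X - a%:P) ^+ (rexp p (E i)) + Q * ('X^p - 'X).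
Proof.
elim: r => [|x r IH] hE.
  by exists 0; rewrite !big_nil mul0r addr0.
have [Q hQ] := IH (fun i hi => hE i (mem_behead (s := x :: r) hi)).
have [Qx hQx] := Y_red pr a _ (hE x (mem_head x r)).
exists (w x *: Qx + Q); rewrite !big_cons hQ hQx.
rewrite scalerDr -!mul_polyC; ring.
Qed.

Lemma alpha_int [p] (pr : prime p) (f : {poly rat}) (al c0 : rat) n :
  size f = n.+1 -> (0 < n)%N -> intP p f -> p_integral p c0 ->
  ~~ (p %| `|numq f`_n|)%N -> f.[al] = c0 -> p_integral p al.
Proof.
move=> szf n0 iF ic0 hn hf.
rewrite /p_integral; apply/negP => hb.
set a := numq al; set b := denq al.
have key : \sum_(i < n.+1) f`_i * (a ^+ i * b ^+ (n - i))%:~R = c0 * (b ^+ n)%:~R.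
  rewrite -hf horner_coef szf mulr_suml; apply: eq_bigr => i _.
  rewrite -mulrA; congr (_ * _).
  have ha : (a%:~R : rat) = al * b%:~R by rewrite numqE.
  rewrite rmorphM !rmorphXn /= ha exprMn -mulrA -exprD subnKC //.
  by rewrite -ltnS.
have H : forall i : 'I_n.+1, true -> p_integral p (f`_i * (a ^+ i * b ^+ (n - i))%:~R).
  by move=> i _; have [] := ratp_mul _ pr _ _ (iF i) (ratp_int p pr (a ^+ i * b ^+ (n - i))).1.
have [_ eL] := @ratp_sum _ pr 'I_n.+1 (index_enum _) (fun _ => true)
  (fun i : 'I_n.+1 => f`_i * (a ^+ i * b ^+ (n - i))%:~R) H.
have [_ eR] := ratp_mul _ pr _ _ ic0 (ratp_int p pr (b ^+ n)).1.
have := congr1 (rat_modp p) key; rewrite eL eR.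
have b0 : (b%:~R : 'F_p) = 0 by apply/eqP; rewrite Fp_int0.
rewrite (ratp_int p pr (b ^+ n)).2 rmorphXn /= b0 expr0n (gtn_eqF n0) mulr0.
rewrite big_ord_recr /= big1 ?add0r; last first.
  move=> i _; have [_ ->] := ratp_mul _ pr _ _ (iF i) (ratp_int p pr (a ^+ i * b ^+ (n - i))).1.
  rewrite (ratp_int p pr (a ^+ i * b ^+ (n - i))).2 rmorphM !rmorphXn /= b0 expr0n.
  by rewrite subn_eq0 leqNgt ltn_ord /= mulr0 mulr0.
have [_ ->] := ratp_mul _ pr _ _ (iF n) (ratp_int p pr (a ^+ n * b ^+ (n - n))).1.
rewrite (ratp_int p pr (a ^+ n * b ^+ (n - n))).2 rmorphM !rmorphXn /= subnn expr0 mulr1.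
move/eqP; rewrite mulf_eq0 expf_eq0 n0 /= => /orP [].
  by rewrite (ratp0_eq _ pr _ (iF n)) (negbTE hn).
rewrite (Fp_int0 _ pr) => ha.
have := coprime_num_den al; rewrite /coprime => /eqP g1.
have : (p %| gcdn `|numq al| `|denq al|)%N by rewrite dvdn_gcd ha.
by rewrite g1 dvdn1 => /eqP p1; rewrite p1 in pr.
Qed.

Lemma rexp_lt p e' : (1 < p)%N -> (rexp p e' < p)%N.
Proof.
move=> p2; have pm : (0 < p.-1)%N by rewrite -ltnS (ltn_predK p2).
have := ltn_pmod (e'.-1) pm; rewrite /rexp; lia.
Qed.

Lemma rexp_sub p e' : (e' - rexp p e' = e'.-1 - e'.-1 %% p.-1)%N.
Proof. rewrite /rexp; lia. Qed.

Theorem mainTheorem2 (alpha : rat) (t : nat) (c : nat -> rat) (e : nat -> nat)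
  (BT BH BN : nat) :
  (forall i, (1 <= i <= t)%N -> c i != 0) ->
  (0 < e 1%N)%N ->
  (forall i, (1 <= i < t)%N -> (e i < e i.+1)%N) ->
  (t <= BT)%N ->
  (forall i, (i <= t)%N -> (qsize (c i) <= BH)%N) ->
  ((size (shifted_sparse alpha t c e)).-1 <= 2 ^ BN)%N ->
  (2 * BT < (size (shifted_sparse alpha t c e)).-1)%N ->
  exists C1 C2 : nat,
    [/\ (0 < C1)%N, (C1 <= 2 ^ (2 * BH))%N, (0 < C2)%N,
        (C2 <= 2 ^ (BN * (3 * BT - 1)))%N &
        forall p : nat, prime p -> ~~ (p %| C1)%N -> ~~ ((p.-1) %| C2)%N ->
          (forall k, p_integral p (shifted_sparse alpha t c e)`_k) ->
          (2 * BT < (size (red_p p (shifted_sparse alpha t c e))).-1)%N].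
Proof.
move=> hc he1 hstep hBT hsz hBN hdeg.
set f := shifted_sparse alpha t c e.
have hmon : forall i j, (1 <= i)%N -> (i < j)%N -> (j <= t)%N -> (e i < e j)%N.
  move=> i j hi; elim: j => // j IH hij hjt.
  rewrite ltnS leq_eqVlt in hij; case/orP: hij => [/eqP eij|hij].
    by subst i; apply: hstep; rewrite hi hjt.
  apply: ltn_trans (IH hij (ltnW hjt)) _; apply: hstep.
  by rewrite hjt (leq_trans hi (ltnW hij)).
have hepos : forall i, (1 <= i <= t)%N -> (0 < e i)%N.
  move=> i /andP [hi hit]; case: (ltnP 1 i) => h.
    exact: ltn_trans he1 (hmon 1%N i (leqnn 1) h hit).
  have -> : i = 1%N by apply/anti_leq; rewrite h hi.
  exact: he1.
have hinj : forall i j, (1 <= i <= t)%N -> (1 <= j <= t)%N -> i != j -> e i != e j.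
  move=> i j /andP [hi hit] /andP [hj hjt]; case: (ltngtP i j) => // h _.
    by rewrite ltn_eqF // hmon.
  by rewrite gtn_eqF // hmon.
have hle : forall i, (1 <= i <= t)%N -> (e i <= e t)%N.
  move=> i /andP [hi hit]; rewrite leq_eqVlt in hit; case/orP: hit => [/eqP -> //|h].
  by rewrite ltnW // hmon.
have t1 : (1 <= t)%N.
  case: t hc hstep hBT hsz hBN hdeg f hmon hepos hinj hle => // _ _ _ _ _ hdeg.
  rewrite /shifted_sparse big_geq // addr0 size_polyC in hdeg.
  by case: (c 0%N != 0) hdeg.
set g0 := (c 0%N)%:P + \sum_(1 <= i < t.+1) c i *: 'X^(e i).
have fg : f = g0 \Po ('X - alpha%:P).
  rewrite /f /shifted_sparse /g0 comp_polyD comp_polyC linear_sum /=.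
  congr (_ + _); apply: eq_bigr => i _.
  by rewrite linearZ /= comp_Xn_poly.
have gf : g0 = f \Po ('X + alpha%:P).
  by rewrite fg -comp_polyA comp_polyB comp_polyX comp_polyC addrK comp_polyXr.
have cg : forall j, (1 <= j <= t)%N -> g0`_(e j) = c j.
  move=> j hj; apply: coef_sparse => //; last exact: hepos.
  by move=> i hi ij; apply: hinj.
have cg0 : g0`_0 = c 0%N.
  by rewrite /g0 coefD coefC eqxx coef_sum big1_seq ?addr0 // => i /andP [_];
    rewrite mem_index_iota ltnS => hi; rewrite coefZ coefXn (ltn_eqF (hepos i hi)) mulr0.
have t1t : (1 <= t <= t)%N by rewrite t1 leqnn.
have szg : size g0 = (e t).+1.
  apply/anti_leq/andP; split.
    apply/leq_sizeP => k hk; apply: coef_sparse_hi; last exact: leq_ltn_trans hk.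
    by move=> i hi; apply: leq_ltn_trans (hle i hi) hk.
  by apply: size_gt_coef; rewrite cg // hc.
have szf : size f = (e t).+1 by rewrite fg size_comp_poly2 ?size_XsubC.
have lcf : f`_(e t) = c t.
  have := lead_coef_comp g0 (q := 'X - alpha%:P); rewrite size_XsubC => /(_ isT).
  rewrite -fg lead_coefXsubC expr1n mulr1 !lead_coefE szf szg /= cg //.
have fa : f.[alpha] = c 0%N.
  by rewrite fg horner_comp hornerXsubC subrr horner_coef0 cg0.
have nE : (size f).-1 = e t by rewrite szf.
rewrite -/f nE in hBN hdeg.
set C1 := (`|numq (c t)| * `|denq (c t)| * `|denq (c 0%N)|)%N.
set C2 := ((\prod_(1 <= i < t) (e t - e i)) * \prod_(1 <= k < (2 * BT).+1) (e t - k))%N.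
exists C1, C2; split.
- rewrite /C1 !muln_gt0 !absz_gt0 !denq_neq0 numq_eq0 hc //.
- have hA : forall m, (m <= 2 ^ clog2 m.+1)%N.
    by move=> m; apply: leq_trans (leqnSn m) (up_logP _ _).
  have h1 := hsz t (leqnn t); have h0 := hsz 0%N (leq0n t).
  rewrite /qsize in h1 h0.
  apply: leq_trans (leq_mul (leq_mul (hA _) (hA _)) (hA _)) _.
  rewrite -!expnD leq_pexp2l //; lia.
- rewrite /C2 muln_gt0; apply/andP; split; rewrite big_seq; apply: prodn_cond_gt0 => i;
    rewrite mem_index_iota => /andP [hi1 hi2].
    by rewrite subn_gt0 hmon.
  by rewrite subn_gt0; apply: leq_ltn_trans hdeg; rewrite -ltnS.
- have hb : forall k, (e t - k <= 2 ^ BN)%N by move=> k; apply: leq_trans (leq_subr _ _) hBN.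
  have L1 : (\prod_(1 <= i < t) (e t - e i) <= \prod_(1 <= i < t) 2 ^ BN)%N.
    by apply: leq_prod => i _; apply: hb.
  have L2 : (\prod_(1 <= k < (2 * BT).+1) (e t - k) <= \prod_(1 <= k < (2 * BT).+1) 2 ^ BN)%N.
    by apply: leq_prod => i _; apply: hb.
  apply: leq_trans (leq_mul L1 L2) _.
  rewrite !prod_nat_const_nat -!expnM -expnD leq_pexp2l // -mulnDr leq_mul2l.
  apply/orP; right; lia.
move=> p pr pC1 pC2 hint.
have p2 : (1 < p)%N := prime_gt1 pr.
have pm : (0 < p.-1)%N by rewrite -ltnS (ltn_predK p2).
move: (pC1); rewrite /C1 !Euclid_dvdM // !negb_or => /andP [/andP [pn pd] pd0].
have ict : p_integral p (c t) := pd.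
have ic0 : p_integral p (c 0%N) := pd0.
have iF : intP p f := hint.
have et0 : (0 < e t)%N := hepos t t1t.
have ial : p_integral p alpha.
  apply: (alpha_int pr f alpha (c 0%N) (e t) szf et0 iF ic0 _ fa).
  by rewrite lcf.
have iXa : RelP p ('X + alpha%:P) ('X + (rat_modp p alpha)%:P).
  exact: RelP_add pr _ _ _ _ (RelP_X pr) (RelP_C pr _ ial).
have ig0 : intP p g0 by rewrite gf; apply: (intP_comp pr _ _ iF iXa.1).
have ic : forall i, (i <= t)%N -> p_integral p (c i).
  move=> i; case: i => [_|i hi]; first exact: ic0.
  by rewrite -cg; [apply: ig0 | rewrite hi].
set Yb := 'X - (rat_modp p alpha)%:P.
have RY : RelP p ('X - alpha%:P) Yb.
  have [io eo] := ratp_opp _ pr _ ial.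
  have := RelP_add pr _ _ _ _ (RelP_X pr) (RelP_C pr _ io).
  by rewrite eo !polyCN.
have RF : RelP p f ((rat_modp p (c 0%N))%:P +
                    \sum_(1 <= i < t.+1) rat_modp p (c i) *: Yb ^+ (e i)).
  rewrite /f /shifted_sparse; apply: (RelP_add pr); first exact: RelP_C pr _ ic0.
  rewrite !big_seq; apply: (RelP_sum pr) => i; rewrite mem_index_iota ltnS => /andP [_ hi].
  exact: RelP_scale pr _ _ _ (ic i hi) (RelP_exp pr _ _ _ RY).
set M := ('X^p - 'X : {poly 'F_p}).
have [Q hQ] := sum_red pr (rat_modp p alpha) (index_iota 1 t.+1)
  (fun i => rat_modp p (c i)) e
  (fun i hi => hepos i ltac:(by move: hi; rewrite mem_index_iota ltnS)).
set S := (rat_modp p (c 0%N))%:P + \sum_(1 <= i < t.+1) rat_modp p (c i) *: 'X^(rexp p (e i)).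
have RS : S \Po Yb = (rat_modp p (c 0%N))%:P +
            \sum_(1 <= i < t.+1) rat_modp p (c i) *: Yb ^+ (rexp p (e i)).
  rewrite /S comp_polyD comp_polyC linear_sum /=.
  congr (_ + _); apply: eq_bigr => i _.
  by rewrite linearZ /= comp_Xn_poly.
have szM : size M = p.+1.
  by rewrite /M size_addl ?size_polyXn // size_opp size_polyX ltnS.
have rlt : forall e', (rexp p e' < p)%N.
  by move=> e'; apply: rexp_lt.
have szS : (size S <= p)%N.
  apply/leq_sizeP => k hk; apply: coef_sparse_hi; last by apply: leq_trans hk; apply: ltnW.
  by move=> i _; exact: leq_trans (rlt _) hk.
have red : red_p p f = S \Po Yb.
  rewrite /red_p; have -> : map_poly (rat_modp p) f = PhiP p f by [].
  rewrite RF.2 hQ addrA -RS modpD modp_mull addr0 modp_small //.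
  by rewrite size_comp_poly2 ?size_XsubC // szM ltnS.
have hr : forall i, (1 <= i < t)%N -> rexp p (e i) != rexp p (e t).
  move=> i /andP [hi1 hi2]; apply/negP => /eqP hreq.
  have ei0 : (0 < e i)%N by apply: hepos; rewrite hi1 ltnW.
  have hd : (p.-1 %| e t - e i)%N.
    rewrite -eqn_mod_dvd; last by rewrite ltnW // hmon.
    rewrite -(prednK et0) -(prednK ei0) -[(e t).-1.+1]addn1 -[(e i).-1.+1]addn1 eqn_modDr.
    by move: hreq; rewrite /rexp => /succn_inj ->.
  have : (p.-1 %| C2)%N.
    rewrite /C2 dvdn_mulr // (bigD1_seq i) ?mem_index_iota ?hi1 ?hi2 ?uniq_index_iota //=.
    by rewrite dvdn_mulr.
  by rewrite (negbTE pC2).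
have hrt : (2 * BT < rexp p (e t))%N.
  rewrite ltnNge; apply/negP => hle2.
  have hd : (p.-1 %| e t - rexp p (e t))%N.
    rewrite rexp_sub.
    by rewrite {1}(divn_eq (e t).-1 p.-1) addnK dvdn_mull.
  have : (p.-1 %| C2)%N.
    rewrite /C2 dvdn_mull // (bigD1_seq (rexp p (e t))) ?uniq_index_iota //=.
      by rewrite dvdn_mulr.
    by rewrite mem_index_iota ltnS hle2 /rexp.
  by rewrite (negbTE pC2).
have cS : S`_(rexp p (e t)) = rat_modp p (c t).
  rewrite /S; apply: (@coef_sparse _ _ _ (fun i => rexp p (e i))) => // i /andP [hi1 hi2] hit.
  by apply: hr; rewrite hi1 ltn_neqAle hit hi2.
have phict : rat_modp p (c t) != 0 by rewrite (ratp0_eq _ pr _ ict).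
rewrite red size_comp_poly2 ?size_XsubC //.
have h := size_gt_coef _ S (rexp p (e t)); rewrite cS in h; have {}h := h phict.
apply: leq_trans hrt _; rewrite -ltnS (ltn_predK h); exact: h.
Qed.
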